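(* For $\mathbf k\in\mathbb Z^r_{++}$ let $\tilde C^d(\lambda,\mu,\mathbf k)=\frac{\prod_{1\le i\le j\le r}(\lambda+\mu-1-\frac d2(i+j-2))_{k_i+k_j}}{\prod_{1\le i<j\le r+1}(\lambda+\mu-1-\frac d2(i+j-3))_{k_i+k_j}}$ with $k_{r+1}=0$. If $1\le m_1\le m_2\le r$, $k_1=\dots=k_{m_1}$ and $k_{m_2+1}=0$, then $$\{(\lambda,\mu)\in\mathbb C^2:\tilde C^d(\lambda,\mu,\mathbf k)=0\}\subset\Bigl\{(\lambda,\mu):\ \tfrac d2(m_1-1)-2k_1+2\le\lambda+\mu\le d(m_2-1)-k_{m_2}+1\Bigr\}$$ if $k_1\ge1$, and the set is empty if $k_1=0$. In particular, for $m=0,1,\dots,r-1$, if $k_{m+1}=0$ then $\tilde C^d(\lambda,\mu,\mathbf k)\ne0$ for all real $\lambda,\mu\ge\frac d2m$.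
   Context: $r\ge1$ integer, $d>0$ real, $\mathbb Z^r_{++}=\{\mathbf k\in\mathbb Z^r:k_1\ge\dots\ge k_r\ge0\}$, $(a)_m=a(a+1)\cdots(a+m-1)$. $\tilde C^d$ is a rational function of $\lambda+\mu$; its zero set means the points where the reduced rational function vanishes (the inequalities in particular force $\lambda+\mu$ real). *)

(* Defs.v *)
From HB Require Import structures.
From mathcomp Require Import all_boot all_order all_algebra.
From mathcomp Require Import reals complex.
Set Implicit Arguments. Unset Strict Implicit. Unset Printing Implicit Defensive.
Import Order.TTheory GRing.Theory Num.Theory.
Local Open Scope ring_scope.

(* Rising factorial as a polynomial in the variable s = lambda + mu:
   poch c n = (s + c)_n = prod_{t < n} (s + c + t). *)
Definition poch (F : fieldType) (c : F) (n : nat) : {poly F} :=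
  \prod_(t < n) ('X + (c + t%:R)%:P).

Definition kext (r : nat) (k : nat -> nat) (i : nat) : nat :=
  if (1 <= i <= r)%N then k i else 0%N.

Section Ct.
Variables (R : realType) (d : R) (r : nat) (k : nat -> nat).
Local Notation C := R[i].
Local Notation kk := (kext r k).

Definition Ct_num : {poly C} :=
  \prod_(1 <= i < r.+1) \prod_(i <= j < r.+1)
     poch (((- 1 - d / 2 * ((i + j)%:R - 2)) : R)%:C)%C (kk i + kk j).

Definition Ct_den : {poly C} :=
  \prod_(1 <= i < r.+2) \prod_(i.+1 <= j < r.+2)
     poch (((- 1 - d / 2 * ((i + j)%:R - 3)) : R)%:C)%C (kk i + kk j).

(* s is a zero of the reduced rational function Ct_num / Ct_den:
   the numerator divided by gcd(num, den) vanishes at s. *)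
Definition Ct_zero (s : C) : bool :=
  (Ct_num %/ gcdp Ct_num Ct_den).[s] == 0.
End Ct.

(* Main.v *)
Require Import Defs.
From HB Require Import structures.
From mathcomp Require Import all_boot all_order all_algebra.
From mathcomp Require Import reals complex.
From mathcomp Require Import ring lra zify.
Import Order.TTheory GRing.Theory Num.Theory.
Local Open Scope ring_scope.

Lemma pochD (F : fieldType) (c : F) a b :
  poch c (a + b) = poch c a * poch (c + a%:R) b.
Proof.
rewrite /poch big_split_ord /=; congr (_ * _); apply: eq_bigr => t _ /=.
by rewrite natrD addrA.
Qed.

Lemma poch_monic (F : fieldType) (c : F) n : poch c n \is monic.
Proof. by apply: monic_prod => t _; apply: monicXaddC. Qed.

Lemma root_prod (F : fieldType) (I : eqType) (s : seq I) (G : I -> {poly F}) x :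
  root (\prod_(i <- s) G i) x -> exists2 i, i \in s & root (G i) x.
Proof.
elim: s => [|a s IH]; first by rewrite big_nil rootC oner_eq0.
rewrite big_cons rootM => /orP [h|h]; first by exists a; rewrite ?mem_head.
by case: (IH h) => i hi hr; exists i => //; rewrite inE hi orbT.
Qed.

Arguments root_prod {F I s G x}.

Lemma kext_step r k : (forall i : nat, (1 <= i)%N -> (i < r)%N -> (k i.+1 <= k i)%N) ->
  forall j, (1 <= j)%N -> (kext r k j.+1 <= kext r k j)%N.
Proof.
move=> hm j hj; rewrite /kext hj /=.
case: ifP => h1; case: ifP => h2 //; try lia.
by apply: hm.
Qed.

Lemma kext_anti r k : (forall i : nat, (1 <= i)%N -> (i < r)%N -> (k i.+1 <= k i)%N) ->
  forall i j, (1 <= i)%N -> (i <= j)%N -> (kext r k j <= kext r k i)%N.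
Proof.
move=> hm i j hi hij; rewrite -(subnKC hij).
elim: (j - i)%N => [|n IH]; first by rewrite addn0.
rewrite addnS; apply: leq_trans IH; apply: kext_step => //; lia.
Qed.

Section Root.
Variables (R : realType) (d : R) (r : nat) (k : nat -> nat).
Hypothesis hm : forall i : nat, (1 <= i)%N -> (i < r)%N -> (k i.+1 <= k i)%N.
Local Notation kk := (kext r k).
Local Notation C := R[i].

Definition cc (i j : nat) : C := (((- 1 - d / 2 * ((i + j)%:R - 2)) : R)%:C)%C.

Definition Pq : {poly C} :=
  \prod_(1 <= i < r.+1) \prod_(i <= j < r.+1)
     poch (cc i j + (kk i + kk j.+1)%:R) (kk j - kk j.+1).

Lemma Ct_num_eq : Ct_num d r k = Ct_den d r k * Pq.
Proof.
rewrite /Ct_den big_nat_recr //= (@big_geq _ _ _ r.+2 r.+2) // mulr1 /Pq -big_split /=.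
apply: eq_big_nat => i /andP [hi1 hir].
rewrite big_add1 /= -big_split /=.
apply: eq_big_nat => j /andP [hij hjr].
have -> : ((- 1 - d / 2 * ((i + j.+1)%:R - 3)) : R) = - 1 - d / 2 * ((i + j)%:R - 2).
  by rewrite addnS mulrSr; ring.
rewrite -/(cc i j) -pochD -addnA subnKC //.
by apply: kext_step => //; lia.
Qed.

Lemma Ct_den_monic : Ct_den d r k \is monic.
Proof.
by apply: monic_prod => i _; apply: monic_prod => j _; apply: poch_monic.
Qed.

Lemma Ct_root (s : C) :
  Ct_zero d r k s -> exists i j t, [/\ (1 <= i)%N, (i <= j)%N, (j <= r)%N,
     (t < kk j - kk j.+1)%N &
     s = (((1 + d / 2 * ((i + j)%:R - 2) - (kk i + kk j.+1 + t)%:R) : R)%:C)%C].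
Proof.
rewrite /Ct_zero Ct_num_eq mulrC => hz.
have hden : Ct_den d r k != 0 by apply: monic_neq0; apply: Ct_den_monic.
have hg : gcdp (Pq * Ct_den d r k) (Ct_den d r k) %= Ct_den d r k.
  by apply: eqp_trans (gcdpC _ _) (gcdp_mull _ _).
have hq := eqp_divr (Pq * Ct_den d r k) hg.
rewrite mulpK // in hq.
have : root Pq s by rewrite -(eqp_root hq); apply: hz.
move=> hP; have [ i ] := root_prod hP; rewrite mem_index_iota => /andP [hi1 hir] {hP} hP.
have [j] := root_prod hP; rewrite mem_index_iota => /andP [hij hjr] {hP} hP.
have [t _] := root_prod hP; rewrite rootE !hornerE => /eqP hs.
exists i, j, t; split; [exact: hi1 | exact: hij | by [] | exact: ltn_ord | ].
have -> : s = s + cc i j + (kk i + kk j.+1)%:R + t%:R - (cc i j + (kk i + kk j.+1)%:R + t%:R) by ring.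
rewrite hs sub0r.
have E : forall n : nat, (n%:R : C) = ((n%:R : R)%:C)%C by move=> n; rewrite rmorph_nat.
rewrite /cc !E -!rmorphD -rmorphN; congr (_%:C)%C.
by rewrite natrD; ring.
Qed.
End Root.

Arguments kext_anti {r k}.
Arguments Ct_root {R d r k}.

Theorem proposition8p6 (R : realType) (d : R) (r : nat) (k : nat -> nat) :
  0 < d -> (1 <= r)%N ->
  (forall i : nat, (1 <= i)%N -> (i < r)%N -> (k i.+1 <= k i)%N) ->
  (forall m1 m2 : nat, (1 <= m1)%N -> (m1 <= m2)%N -> (m2 <= r)%N ->
     (forall i : nat, (1 <= i <= m1)%N -> k i = k 1%N) ->
     kext r k m2.+1 = 0%N ->
     ((1 <= k 1%N)%N ->
        forall lam mu : R[i], Ct_zero d r k (lam + mu) ->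
          (((d / 2 * (m1 - 1)%:R - 2 * (k 1%N)%:R + 2) : R)%:C)%C <= lam + mu
          /\ lam + mu <= (((d * (m2 - 1)%:R - (k m2)%:R + 1) : R)%:C)%C)
     /\ (k 1%N = 0%N -> forall lam mu : R[i], ~~ Ct_zero d r k (lam + mu)))
  /\
  (forall m : nat, (m < r)%N -> kext r k m.+1 = 0%N ->
     forall lam mu : R, d / 2 * m%:R <= lam -> d / 2 * m%:R <= mu ->
       ~~ Ct_zero d r k (((lam + mu) : R)%:C)%C).
Proof.
move=> hd hr hm.
have anti := kext_anti hm.
have kin : forall i, (1 <= i)%N -> (i <= r)%N -> kext r k i = k i.
  by move=> i h1 h2; rewrite /kext h1 h2.
have hd2 : 0 <= d / 2 by lra.
split.
  move=> m1 m2 h1 h12 h2r hk1 hkm2; split.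
    move=> hk lam mu /(Ct_root hm) [i [j [t [hi hij hjr ht ->]]]]; rewrite !lecR.
    have hjm2 : (j <= m2)%N.
      case: (leqP j m2) => // hlt.
      have := anti m2.+1 j (ltn0Sn _) hlt; rewrite hkm2; lia.
    have hjm1 : (m1 <= j)%N.
      case: (leqP m1 j) => // hlt.
      have e1 : kext r k j = k 1%N by rewrite kin ?hk1 //; try lia; apply/andP; split; lia.
      have e2 : kext r k j.+1 = k 1%N by rewrite kin ?hk1 //; try lia; apply/andP; split; lia.
      by move: ht; rewrite e1 e2 subnn.
    have ki : (k m2 <= kext r k i)%N by rewrite -(kin m2) //; try lia; apply: anti; lia.
    have ki1 : (kext r k i <= k 1%N)%N by rewrite -kin //; apply: anti.
    have kj1 : (kext r k j <= k 1%N)%N by rewrite -kin //; apply: anti; lia.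
    have kjj : (kext r k j.+1 <= kext r k j)%N by apply: anti; lia.
    have n1 : ((kext r k i + kext r k j.+1 + t) + 1 <= 2 * k 1%N)%N by lia.
    have n2 : (m1 + 1 <= i + j)%N by lia.
    have n3 : (i + j <= 2 * m2)%N by lia.
    have n4 : (k m2 <= kext r k i + kext r k j.+1 + t)%N by lia.
    move: n1 n2 n3 n4; move: (kext r k i + kext r k j.+1 + t)%N => N.
    rewrite -!(ler_nat R) ?natrD ?natrM !natrB //; try lia.
    move=> n1 n2 n3 n4.
    have p1 : 0 <= d * (i%:R + j%:R - m1%:R - 1) by apply: mulr_ge0; lra.
    have p2 : 0 <= d * (m2%:R + m2%:R - i%:R - j%:R) by apply: mulr_ge0; lra.
    split; nra.
  move=> hk0 lam mu; apply/negP => /(Ct_root hm) [i [j [t [hi hij hjr ht _]]]].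
  have : (kext r k j <= k 1%N)%N by rewrite -kin //; apply: anti; lia.
  lia.
move=> m hmr hkm lam mu hl hmu; apply/negP => /(Ct_root hm) [i [j [t [hi hij hjr ht hs]]]].
have hs' := congr1 (@complex.Re R) hs; rewrite /= in hs'.
have hjm : (j <= m)%N.
  case: (leqP j m) => // hlt.
  have := anti m.+1 j (ltn0Sn _) hlt; rewrite hkm; lia.
have kij : (kext r k j <= kext r k i)%N by apply: anti.
have n1 : (1 <= kext r k i + kext r k j.+1 + t)%N by lia.
have n3 : (i + j <= 2 * m)%N by lia.
have n5 : (1 <= m)%N by lia.
move: n1 n3 n5 hs'; move: (kext r k i + kext r k j.+1 + t)%N => N.
rewrite -!(ler_nat R) ?natrD ?natrM.
move=> n1 n3 n5 hs'.
have p2 : 0 <= d * (m%:R + m%:R - i%:R - j%:R) by apply: mulr_ge0; lra.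
have p3 : 0 < d * m%:R by apply: mulr_gt0 => //; lra.
nra.
Qed.
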